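(* Let $\mathcal{T}$ be an $l$-eligible multiset of tuples partitioned into multisets $Q_1,\dots,Q_s,R$. Suppose every $Q_i$ is dead and $R$ is not $l$-eligible. Then for every pillar $p$ of $R$ there exists some $i$ such that $p$ is not a conflicting pillar of $Q_i$.
   Context: Each tuple has a sensitive attribute (SA) value. For a multiset $Q$ and SA value $v$, $h(Q,v)$ is the number of tuples in $Q$ with SA value $v$, $h(Q)=\max_v h(Q,v)$, and the pillars of $Q$ are the SA values $v$ with $h(Q,v)=h(Q)$. $Q$ is $l$-eligible if $|Q|\ge l\cdot h(Q)$. A multiset $Q_i$ is thin if $|Q_i|=l\cdot h(Q_i)$; it is conflicting if at least one of its pillars is also a pillar of $R$ (such pillars are its conflicting pillars); it is dead if it is both thin and conflicting. *)

(* Defs.v *)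
From mathcomp Require Import all_boot.
Set Implicit Arguments. Unset Strict Implicit. Unset Printing Implicit Defensive.

(* Tuples have type [Tup]; [sa : Tup -> V] gives the sensitive attribute.
   A multiset of tuples is a [seq Tup] (order irrelevant). *)
Section Defs.
Variables (Tup V : eqType) (sa : Tup -> V).

Definition hv (Q : seq Tup) (v : V) : nat := count (fun t => sa t == v) Q.

(* h(Q) = max_v h(Q,v); only values occurring in Q can contribute,
   and the max is 0 for empty Q. *)
Definition h (Q : seq Tup) : nat := \max_(t <- Q) hv Q (sa t).

Definition pillar (Q : seq Tup) (v : V) : Prop := hv Q v = h Q.

Definition eligible (l : nat) (Q : seq Tup) : Prop := l * h Q <= size Q.

Definition thin (l : nat) (Q : seq Tup) : Prop := size Q = l * h Q.

Definition conflicting_pillar (Q R : seq Tup) (v : V) : Prop :=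
  pillar Q v /\ pillar R v.

Definition conflicting (Q R : seq Tup) : Prop :=
  exists v, conflicting_pillar Q R v.

Definition dead (l : nat) (Q R : seq Tup) : Prop := thin l Q /\ conflicting Q R.
End Defs.

(* Main.v *)
Require Import Defs.
From mathcomp Require Import all_boot.
From mathcomp Require Import zify.
From Stdlib Require Import Classical.

Lemma hv_le_h (Tup V : eqType) (sa : Tup -> V) (Q : seq Tup) v : hv sa Q v <= h sa Q.
Proof.
rewrite /h; case: (boolP (has (fun t => sa t == v) Q)) => [/hasP [t tQ /eqP <-]|].
  exact: (@leq_bigmax_seq _ _ xpredT (fun u => hv sa Q (sa u)) t tQ isT).
by rewrite has_count -leqNgt /hv leqn0 => /eqP ->.
Qed.

Lemma flat_eq (Tup V : eqType) (sa : Tup -> V) l p (L : seq (seq Tup)) :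
  (forall q, q \in L -> size q = l * h sa q /\ hv sa q p = h sa q) ->
  size (flatten L) = l * hv sa (flatten L) p.
Proof.
elim: L => [|q L IH] H /=; first by rewrite muln0.
have [H1 H2] := H q (mem_head _ _).
rewrite size_cat /hv count_cat mulnDr -/(hv sa q p) -/(hv sa (flatten L) p).
rewrite IH; last by move=> q' q'L; apply: H; rewrite in_cons q'L orbT.
by rewrite H1 H2.
Qed.

Theorem lemma7 (Tup V : eqType) (sa : Tup -> V) (l s : nat)
  (T : seq Tup) (Q : 'I_s -> seq Tup) (R : seq Tup) :
  eligible sa l T ->
  perm_eq T (flatten [seq Q i | i <- enum 'I_s] ++ R) ->
  (forall i : 'I_s, dead sa l (Q i) R) ->
  ~ eligible sa l R ->
  forall p : V, pillar sa R p ->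
  exists i : 'I_s, ~ conflicting_pillar sa (Q i) R p.
Proof.
move=> elT pT dQ nR p pR.
apply: Classical_Pred_Type.not_all_not_ex => Hall.
have Hc : forall i, conflicting_pillar sa (Q i) R p.
  by move=> i; apply: Classical_Prop.NNPP; apply: Hall.
set F := flatten _ in pT.
have HF : size F = l * hv sa F p.
  apply: flat_eq => q /mapP [i _ ->].
  by split; [case: (dQ i) | case: (Hc i)].
move: elT nR; rewrite /eligible => elT nR.
have sT := perm_size pT.
have hT : hv sa T p = hv sa (F ++ R) p by rewrite /hv (permP pT).
have := @hv_le_h _ _ sa T p.
rewrite hT /hv count_cat -/(hv sa F p) -/(hv sa R p) pR => hle.
rewrite size_cat HF in sT.
have : l * (hv sa F p + h sa R) <= l * h sa T by apply: leq_mul.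
move: nR => /negP; rewrite -ltnNge => nR.
nia.
Qed.
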